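(* Let $L$ be a finite set of axis-aligned line segments in the plane, and let $\mathcal{C}$ be the collection of associated subsets of the rectangular cells of the arrangement of $L$. For any three line segments $\ell, \ell', \ell'' \in L$, there are at most two subsets in $\mathcal{C}$ containing all three of $\ell, \ell', \ell''$.
   Context: A cell of the arrangement of $L$ is a maximal connected region of the plane not intersected by any segment of $L$. A cell is rectangular if its boundary is formed by exactly four segments of $L$; its associated subset is the set $\{\ell_1,\ell_2,\ell_3,\ell_4\}\subseteq L$ of these four bounding segments. $\mathcal{C}$ is the collection of associated subsets of all rectangular cells. *)

(* Defs.v *)
From HB Require Import structures.
From mathcomp Require Import all_boot all_order all_algebra.
From mathcomp Require Import all_classical all_reals all_analysis.
Set Implicit Arguments. Unset Strict Implicit. Unset Printing Implicit Defensive.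
Import Order.TTheory GRing.Theory Num.Theory.
Import numFieldNormedType.Exports.
Local Open Scope classical_set_scope.
Local Open Scope ring_scope.

Section ArrangementDefs.
Variable R : realType.
Notation pt := (R * R)%type.

Definition seg_pts (p q : pt) : set pt :=
  [set z | exists2 t : R, 0 <= t <= 1 &
           z = ((1 - t) * p.1 + t * q.1, (1 - t) * p.2 + t * q.2)].

Definition axis_segment (s : set pt) : Prop :=
  exists p q : pt, (p.1 = q.1 \/ p.2 = q.2) /\ s = seg_pts p q.

Definition arr_complement (L : set (set pt)) : set pt :=
  ~` (\bigcup_(l in L) l).

Definition is_cell (L : set (set pt)) (C : set pt) : Prop :=
  exists x, arr_complement L x /\ C = connected_component (arr_complement L) x.

Definition boundary (A : set pt) : set pt := closure A `\` interior A.

Definition forms_boundary (l C : set pt) : Prop :=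
  exists x y : pt, x <> y /\ l x /\ l y /\ boundary C x /\ boundary C y.

Definition assoc_subset (L : set (set pt)) (C : set pt) : set (set pt) :=
  [set l | L l /\ forms_boundary l C].

Definition rectangular_cell (L : set (set pt)) (C : set pt) : Prop :=
  is_cell L C /\ (assoc_subset L C #= `I_4)%card.

Definition rect_subsets (L : set (set pt)) : set (set (set pt)) :=
  [set S | exists C, rectangular_cell L C /\ S = assoc_subset L C].

End ArrangementDefs.

(* Main.v *)
Require Import Defs.
From HB Require Import structures.
From mathcomp Require Import all_boot all_order all_algebra.
From mathcomp Require Import all_classical all_reals all_analysis.
From mathcomp Require Import ring lra.
Import Order.TTheory GRing.Theory Num.Theory.
Import numFieldNormedType.Exports.
Local Open Scope classical_set_scope.
Local Open Scope ring_scope.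
Set Implicit Arguments. Unset Strict Implicit. Unset Printing Implicit Defensive.

Section Frames.
Variable R : realType.
Definition mk (b : bool) (u v : R) : R * R := if b then (v, u) else (u, v).
Definition pc (b : bool) (z : R * R) : R := if b then z.2 else z.1.
Definition sc (b : bool) (z : R * R) : R := if b then z.1 else z.2.

Lemma pc_mk b u v : pc b (mk b u v) = u. Proof. by case: b. Qed.
Lemma sc_mk b u v : sc b (mk b u v) = v. Proof. by case: b. Qed.
Lemma mk_pcsc b z : mk b (pc b z) (sc b z) = z. Proof. by case: b; case: z. Qed.
Lemma pcN b z : pc (~~ b) z = sc b z. Proof. by case: b. Qed.
Lemma scN b z : sc (~~ b) z = pc b z. Proof. by case: b. Qed.
Lemma mkN b u v : mk (~~ b) u v = mk b v u. Proof. by case: b. Qed.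

Lemma ball_prodE (x y : R * R) e :
  ball x e y <-> (`|x.1 - y.1| < e /\ `|x.2 - y.2| < e).
Proof. by rewrite /ball /= /ball /=. Qed.

Lemma ball_mk b u v u' v' e :
  ball (mk b u v) e (mk b u' v') <-> (`|u - u'| < e /\ `|v - v'| < e).
Proof. rewrite ball_prodE; case: b => /=; tauto. Qed.

Lemma cont_mk b (a s c : R) : continuous (fun t : R => mk b (a + s * t) c).
Proof.
move=> t.
have h1 : (fun t : R => a + s * t) @ t --> (a + s * t).
  by apply: cvgD; [exact: cvg_cst | apply: cvgMr; exact: cvg_id].
case: b => /=.
- have := @cvg_pair _ _ _ (nbhs t) _ _ _ _ _ _ _ (cvg_cst c) h1. exact.
- have := @cvg_pair _ _ _ (nbhs t) _ _ _ _ _ _ _ h1 (cvg_cst c). exact.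
Qed.

Definition ray b (s : R) (z : R * R) (t : R) := mk b (pc b z + s * t) (sc b z).

Lemma rayS_conn b s z t1 : connected (ray b s z @` `[0, t1]).
Proof.
apply: connected_continuous_connected; first exact: segment_connected.
apply: continuous_subspaceT => t; exact: cont_mk.
Qed.

Lemma ray0 b s z : ray b s z 0 = z.
Proof. by rewrite /ray mulr0 addr0 mk_pcsc. Qed.

End Frames.

Section Segs.
Variable R : realType.

Lemma seg_closed (p q : R * R) : closed (seg_pts p q).
Proof.
pose f := fun t : R => ((1 - t) * p.1 + t * q.1, (1 - t) * p.2 + t * q.2).
have -> : seg_pts p q = f @` `[0, 1].
  rewrite /seg_pts; apply/seteqP; split => z.
  - by move=> [t t01 ->]; exists t => //; rewrite /= in_itv.
  - by move=> [t t01 <-]; exists t => //; move: t01; rewrite /= in_itv.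
apply: compact_closed; first exact: norm_hausdorff.
apply: continuous_compact; last exact: segment_compact.
apply: continuous_subspaceT => t.
have hc : forall a b : R, (fun t : R => (1 - t) * a + t * b) @ t --> ((1 - t) * a + t * b).
  move=> a b; apply: cvgD; apply: cvgMl; first (apply: cvgB; [exact: cvg_cst|exact: cvg_id]).
  exact: cvg_id.
have := @cvg_pair _ _ _ (nbhs t) _ _ _ _ _ _ _ (hc p.1 q.1) (hc p.2 q.2). exact.
Qed.

Lemma seg_bounded (p q : R * R) z : seg_pts p q z ->
  `|z.1| <= `|p.1| + `|q.1| /\ `|z.2| <= `|p.2| + `|q.2|.
Proof.
move=> [t /andP[t0 t1] ->] /=.
have h : forall a b : R, `|(1 - t) * a + t * b| <= `|a| + `|b|.
  move=> a b; apply: (le_trans (ler_normD _ _)); apply: lerD.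
  - rewrite normrM ger0_norm ?subr_ge0 //; rewrite -[X in _ <= X]mul1r.
    by apply: ler_wpM2r => //; rewrite lerBlDr lerDl.
  - by rewrite normrM ger0_norm //; rewrite -[X in _ <= X]mul1r; apply: ler_wpM2r.
by split; apply: h.
Qed.

Lemma axis_frame (s : set (R * R)) b : axis_segment s ->
  (exists c, s `<=` [set z | pc b z = c]) \/ (exists c, s `<=` [set z | sc b z = c]).
Proof.
move=> [p [q [h ->]]].
have E1 : p.1 = q.1 -> seg_pts p q `<=` [set z | z.1 = p.1].
  move=> e z [t _ ->] /=; rewrite -e; ring.
have E2 : p.2 = q.2 -> seg_pts p q `<=` [set z | z.2 = p.2].
  move=> e z [t _ ->] /=; rewrite -e; ring.
case: h => e; case: b.
- by right; exists p.1 => z /(E1 e).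
- by left; exists p.1 => z /(E1 e).
- by left; exists p.2 => z /(E2 e).
- by right; exists p.2 => z /(E2 e).
Qed.
End Segs.

Lemma avoid_finite (R : realType) (F : set R) (u v : R) : finite_set F -> u < v ->
  exists x, u < x < v /\ ~ F x.
Proof.
move=> fF uv; apply: contrapT => hn.
have sub : `]u, v[ `<=` F.
  move=> x; rewrite /= in_itv /= => xin; apply: contrapT => nF; apply: hn.
  by exists x.
have : finite_set `]u, v[ by exact: sub_finite_set fF.
apply/infiniteP; apply/pcard_leP/injfunPex.
exists (fun n : nat => u + (v - u) / (n%:R + 2)).
- move=> n _; rewrite /= in_itv /=.
  have n0 : 0 <= n%:R :> R by exact: ler0n.
  have n2 : 0 < n%:R + 2 :> R by lra.
  have vu : 0 < v - u by rewrite subr_gt0.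
  apply/andP; split; first by rewrite ltrDl divr_gt0.
  rewrite -ltrBrDl ltr_pdivrMr // ltr_pMr //.
  lra.
- move=> m n _ _ /= /addrI.
  have vu : v - u != 0 by rewrite subr_eq0 gt_eqF.
  move/(mulfI vu)/invr_inj/addIr/eqP; rewrite eqr_nat => /eqP //.
Qed.

Section Cells.
Variable R : realType.
Variable L : set (set (R * R)).
Hypothesis finL : finite_set L.
Hypothesis axL : forall l, L l -> axis_segment l.

Let U := \bigcup_(l in L) l.
Let O := arr_complement L.

Lemma OE : O = ~` U. Proof. by []. Qed.

Lemma U_closed : closed U.
Proof.
apply: closed_bigcup => // l /axL [p [q [_ ->]]]; exact: seg_closed.
Qed.

Lemma O_open : open O.
Proof. by rewrite OE openC; exact: U_closed. Qed.

Lemma seqs_bounded (s : seq (set (R * R))) : (forall l, l \in s -> L l) ->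
  exists M : R, 0 < M /\ forall l, l \in s -> forall z, l z -> `|z.1| < M /\ `|z.2| < M.
Proof.
elim: s => [|l s IH] Hs; first by exists 1.
have [M [M0 HM]] : exists M : R, 0 < M /\ forall l, l \in s -> forall z, l z ->
  `|z.1| < M /\ `|z.2| < M.
  by apply: IH => l' ls; apply: Hs; rewrite inE ls orbT.
have [p [q [_ lE]]] := axL (Hs l (mem_head _ _)).
exists (M + `|p.1| + `|q.1| + `|p.2| + `|q.2| + 1); split.
  have := normr_ge0 p.1; have := normr_ge0 p.2; have := normr_ge0 q.1; have := normr_ge0 q.2.
  lra.
move=> l'; rewrite inE => /orP[/eqP ->|l's] z lz.
- rewrite lE in lz; have [h1 h2] := seg_bounded lz.
  have := normr_ge0 p.1; have := normr_ge0 p.2; have := normr_ge0 q.1; have := normr_ge0 q.2.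
  by split; lra.
- have [h1 h2] := HM l' l's z lz.
  have := normr_ge0 p.1; have := normr_ge0 p.2; have := normr_ge0 q.1; have := normr_ge0 q.2.
  by split; lra.
Qed.

Lemma U_bounded : exists M : R, 0 < M /\ forall z, U z -> `|z.1| < M /\ `|z.2| < M.
Proof.
have [X LX] := (finite_fsetP.1 finL).
have [M [M0 HM]] : exists M : R, 0 < M /\ forall l, l \in finmap.enum_fset X -> forall z, l z -> `|z.1| < M /\ `|z.2| < M.
  by apply: seqs_bounded => l lX; rewrite LX.
exists M; split => // z [l Ll lz]; apply: (HM l) => //.
by move: Ll; rewrite LX.
Qed.

Lemma cell_sub C : is_cell L C -> C `<=` O.
Proof. by move=> [x [_ ->]]; exact: connected_component_sub. Qed.

Lemma cell_conn C K : is_cell L C -> connected K -> K `<=` O ->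
  forall z, K z -> C z -> K `<=` C.
Proof.
move=> [x [Ox ->]] cK KO z Kz Cz.
rewrite (same_connected_component Cz).
exact: connected_component_max.
Qed.

Lemma cell_meet C C' z : is_cell L C -> is_cell L C' -> C z -> C' z -> C = C'.
Proof.
move=> [x [_ ->]] [x' [_ ->]] h h'.
by rewrite (same_connected_component h) (same_connected_component h').
Qed.

Lemma path_in C b s z t1 : is_cell L C -> C z -> 0 <= t1 ->
  (forall t, 0 <= t <= t1 -> O (ray b s z t)) -> C (ray b s z t1).
Proof.
move=> cC Cz t10 HO.
have sub : ray b s z @` `[0, t1] `<=` C.
  apply: (cell_conn cC (@rayS_conn R b s z t1) _ (z := z)) => //.
  - by move=> w [t + <-]; rewrite /= in_itv /=; exact: HO.
  - by exists 0; [rewrite /= in_itv /= lexx t10 | exact: ray0].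
by apply: sub; exists t1 => //; rewrite /= in_itv /= lexx t10.
Qed.

Lemma square C z : is_cell L C -> C z -> exists2 e : R, 0 < e &
  forall w, `|z.1 - w.1| < e -> `|z.2 - w.2| < e -> C w.
Proof.
move=> cC Cz.
have Oz := cell_sub cC Cz.
have /nbhs_ballP [e e0 He] : nbhs z O by apply: O_open.
exists e => // w h1 h2.
have Cm : C (w.1, z.2).
  have -> : (w.1, z.2) = ray false (w.1 - z.1) z 1.
    by rewrite /ray /= mulr1; congr (_, _); ring.
  apply: path_in => // t /andP[t0 t1].
  apply: He; apply/ball_prodE => /=; split; last by rewrite subrr normr0.
  rewrite opprD addrA subrr add0r normrN normrM (ger0_norm t0).
  apply: (le_lt_trans _ h1); rewrite distrC -[X in _ <= X]mulr1.
  by apply: ler_wpM2l.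
have -> : w = ray true (w.2 - z.2) (w.1, z.2) 1.
  by rewrite /ray /= mulr1; case: w {h1 h2 Cm} => /= a c; congr (_, _); ring.
apply: path_in => // t /andP[t0 t1].
apply: He; apply/ball_prodE => /=; split => //.
rewrite opprD addrA subrr add0r normrN normrM (ger0_norm t0).
apply: (le_lt_trans _ h2); rewrite distrC -[X in _ <= X]mulr1.
by apply: ler_wpM2l.
Qed.

Lemma near_ray b s z (e t t' : R) : 0 < e -> `|t - t'| < e / (`|s| + 1) ->
  ball (ray b s z t) e (ray b s z t').
Proof.
move=> e0 h; rewrite /ray ball_mk subrr normr0; split => //.
have -> : pc b z + s * t - (pc b z + s * t') = s * (t - t') by ring.
rewrite normrM.
have s1 : 0 < `|s| + 1 by have := normr_ge0 s; lra.
move: h; rewrite ltr_pdivlMr // => h.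
have := normr_ge0 s; have := normr_ge0 (t - t'); nra.
Qed.

Lemma first_hit C b s z t1 : is_cell L C -> C z -> 0 <= t1 -> U (ray b s z t1) ->
  exists t0, [/\ 0 < t0, t0 <= t1, U (ray b s z t0), boundary C (ray b s z t0)
    & forall t, 0 <= t < t0 -> C (ray b s z t)].
Proof.
move=> cC Cz t10 Ut1.
pose K := [set t | 0 <= t <= t1 /\ U (ray b s z t)].
have K1 : K t1 by split => //; rewrite t10 lexx.
have Kne : K !=set0 by exists t1.
have Klb : lbound K 0 by move=> t [/andP[]].
have hK : has_lbound K by exists 0.
pose t0 := inf K.
have t0le : forall t, K t -> t0 <= t by move=> t Kt; exact: ge_inf.
have t0ge0 : 0 <= t0 by exact: lb_le_inf.
have t0le1 : t0 <= t1 by exact: t0le.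
have s1 : 0 < `|s| + 1 by have := normr_ge0 s; lra.
have Ut0 : U (ray b s z t0).
  have cU : U = closure U := (closure_id U).1 U_closed.
  rewrite cU.
  move=> B /nbhs_ballP [e e0 He].
  have e'0 : 0 < e / (`|s| + 1) by rewrite divr_gt0.
  have [t Kt tlt] := inf_adherent e'0 (conj Kne hK).
  exists (ray b s z t); split; first by case: Kt.
  apply: He; apply: near_ray => //.
  have := t0le t Kt => tt.
  rewrite distrC ger0_norm ?subr_ge0 // -/t0; lra.
have Oz := cell_sub cC Cz.
have t0pos : 0 < t0.
  rewrite lt_neqAle t0ge0 andbT; apply/eqP => t00.
  by apply: Oz; rewrite -(ray0 b s z) t00.
have before : forall t, 0 <= t < t0 -> C (ray b s z t).
  move=> t /andP[t0' tt0]; apply: path_in => // t' /andP[t'0 t't].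
  move=> Ut'; have : t0 <= t' by apply: t0le; split => //; rewrite t'0 /=; lra.
  lra.
exists t0; split => //.
split; last first.
  move=> /interior_subset Ct0.
  by apply: (cell_sub cC Ct0).
move=> B /nbhs_ballP [e e0 He].
have e'0 : 0 < e / (`|s| + 1) by rewrite divr_gt0.
pose d := Num.min (t0 / 2) (e / (`|s| + 1) / 2).
have d1 : d <= t0 / 2 by rewrite /d ge_min lexx.
have d2 : d <= e / (`|s| + 1) / 2 by rewrite /d ge_min lexx orbT.
have d0 : 0 < d by rewrite /d lt_min !divr_gt0.
exists (ray b s z (t0 - d)); split.
  apply: before; lra.
apply: He; apply: near_ray => //.
rewrite opprB addrC subrK gtr0_norm //; lra.
Qed.

Definition Bad b C : set R := [set y | exists s, L s /\
  ((~ assoc_subset L C s /\ exists w, s w /\ boundary C w /\ y = sc b w) \/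
   (assoc_subset L C s /\ s `<=` [set z | sc b z = y]))].

Lemma subsingleton_finite (T : Type) (A : set T) :
  (forall x y, A x -> A y -> x = y) -> finite_set A.
Proof.
move=> h; have [[x Ax]|nA] := pselect (A !=set0).
  have -> : A = [set x] by apply/seteqP; split => y //= Ay; [exact: h|rewrite Ay].
  exact: finite_set1.
have -> : A = set0 by apply/seteqP; split => y // Ay; apply: nA; exists y.
exact: finite_set0.
Qed.

Lemma Bad_fin b C : finite_set (Bad b C).
Proof.
pose G s : set R := [set y | (~ assoc_subset L C s /\ exists w, s w /\ boundary C w /\ y = sc b w) \/
   (assoc_subset L C s /\ s `<=` [set z | sc b z = y])].
apply: (@sub_finite_set _ _ (\bigcup_(s in L) G s)).
  by move=> y [s [Ls h]]; exists s.
apply: bigcup_finite => // s Ls; apply: subsingleton_finite => y1 y2.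
case=> [[nS [w1 [sw1 [bw1 ->]]]]|[Ss H1]]; case=> [[nS' [w2 [sw2 [bw2 ->]]]]|[Ss' H2]] //.
- have [->//|ne] := pselect (w1 = w2).
  by exfalso; apply: nS; split => //; exists w1, w2.
- case: Ss => _ [x [_ [_ [sx _]]]].
  by rewrite -(H1 x sx) -(H2 x sx).
Qed.

Lemma nondeg C s b c c' : assoc_subset L C s -> s `<=` [set z | pc b z = c] ->
  s `<=` [set z | sc b z = c'] -> False.
Proof.
move=> [_ [x [y [xy [sx [sy _]]]]]] H1 H2; apply: xy.
by rewrite -(mk_pcsc b x) -(mk_pcsc b y) (H1 x sx) (H1 y sy) (H2 x sx) (H2 y sy).
Qed.

Lemma factG C b w s : boundary C w -> L s -> s w -> ~ Bad b C (sc b w) ->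
  assoc_subset L C s /\ s `<=` [set z | pc b z = pc b w].
Proof.
move=> bw Ls sw nB.
have Ss : assoc_subset L C s.
  apply: contrapT => nS; apply: nB; exists s; split => //; left; split => //.
  by exists w.
split => //.
case: (axis_frame b (axL Ls)) => [[c H]|[c H]].
  by move=> z sz /=; rewrite (H z sz) (H w sw).
exfalso; apply: nB; exists s; split => //; right; split => //.
by move=> z sz /=; rewrite (H z sz) (H w sw).
Qed.

Lemma pc_ray b (s : R) z t : pc b (ray b s z t) = pc b z + s * t.
Proof. by rewrite /ray pc_mk. Qed.
Lemma sc_ray b (s : R) z t : sc b (ray b s z t) = sc b z.
Proof. by rewrite /ray sc_mk. Qed.


Definition le4 (A : set (set (R * R))) := forall a b c d e, A a -> A b -> A c -> A d -> A e ->
  a <> b -> a <> c -> a <> d -> a <> e -> b <> c -> b <> d -> b <> e -> c <> d -> c <> e ->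
  d <> e -> False.

Record rdata b C (al be ga de : R) (ha hb vg vd : set (R * R)) : Prop := RData {
  rd_ab : al < be; rd_gd : ga < de;
  rd_Sha : assoc_subset L C ha; rd_Shb : assoc_subset L C hb;
  rd_Svg : assoc_subset L C vg; rd_Svd : assoc_subset L C vd;
  rd_ha : ha `<=` [set z | sc b z = al]; rd_hb : hb `<=` [set z | sc b z = be];
  rd_vg : vg `<=` [set z | pc b z = ga]; rd_vd : vd `<=` [set z | pc b z = de];
  rd_cls : forall s, assoc_subset L C s -> s = ha \/ s = hb \/ s = vg \/ s = vd }.

Lemma sub_pcN b (s : set (R * R)) c : s `<=` [set z | pc (~~ b) z = c] ->
  s `<=` [set z | sc b z = c].
Proof. by move=> H z /H /=; rewrite pcN. Qed.
Lemma sub_scN b (s : set (R * R)) c : s `<=` [set z | sc (~~ b) z = c] ->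
  s `<=` [set z | pc b z = c].
Proof. by move=> H z /H /=; rewrite scN. Qed.
Lemma sub_pcN' b (s : set (R * R)) c : s `<=` [set z | sc b z = c] ->
  s `<=` [set z | pc (~~ b) z = c].
Proof. by move=> H z /H /=; rewrite pcN. Qed.
Lemma sub_scN' b (s : set (R * R)) c : s `<=` [set z | pc b z = c] ->
  s `<=` [set z | sc (~~ b) z = c].
Proof. by move=> H z /H /=; rewrite scN. Qed.

Lemma rdata_swap b C al be ga de ha hb vg vd :
  rdata b C al be ga de ha hb vg vd -> rdata (~~ b) C ga de al be vg vd ha hb.
Proof.
case=> h1 h2 h3 h4 h5 h6 h7 h8 h9 h10 h11; split => //.
- exact: sub_scN'.
- exact: sub_scN'.
- exact: sub_pcN'.
- exact: sub_pcN'.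
- by move=> s /h11; tauto.
Qed.

Lemma rd_vert b C al be ga de ha hb vg vd s c p :
  rdata b C al be ga de ha hb vg vd -> assoc_subset L C s ->
  s `<=` [set z | pc b z = c] -> s p -> (s = vg /\ c = ga) \/ (s = vd /\ c = de).
Proof.
case=> _ _ _ _ _ _ Ha Hb Hg Hd cls Ss Hs sp.
case: (cls s Ss) => [E|[E|[E|E]]].
- by exfalso; apply: (nondeg Ss Hs); rewrite E; exact: Ha.
- by exfalso; apply: (nondeg Ss Hs); rewrite E; exact: Hb.
- by left; split => //; rewrite -(Hs p sp); move: sp; rewrite E => /Hg.
- by right; split => //; rewrite -(Hs p sp); move: sp; rewrite E => /Hd.
Qed.

Lemma cell_ne C : is_cell L C -> exists z, C z.
Proof. by move=> [x [Ox ->]]; exists x; exact: connected_component_refl. Qed.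

Section Far.
Variable M : R.
Hypothesis M0 : 0 < M.
Hypothesis HM : forall z, U z -> `|z.1| < M /\ `|z.2| < M.

Definition far (z : R * R) := M < `|z.1| \/ M < `|z.2|.
Definition Pstar : R * R := (M + 1, M + 1).

Lemma far_O z : far z -> O z.
Proof. by move=> [h|h] /HM [h1 h2]; lra. Qed.

Lemma far_sc b z : M < `|sc b z| -> far z.
Proof. by case: b => h; [left|right]. Qed.

Lemma far_pc b z : M < `|pc b z| -> far z.
Proof. by case: b => h; [right|left]. Qed.

Lemma leg_far b C z c : is_cell L C -> C z -> M < `|sc b z| -> C (mk b c (sc b z)).
Proof.
move=> cC Cz hz.
have -> : mk b c (sc b z) = ray b (c - pc b z) z 1.
  by rewrite /ray mulr1; congr mk; ring.
apply: path_in => // t _; apply: far_O; apply: (@far_sc b).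
by rewrite sc_ray.
Qed.

Lemma M1 : M < `|M + 1|.
Proof. have h := M0; rewrite ger0_norm; lra. Qed.

Lemma far_to_star C z : is_cell L C -> C z -> far z -> C Pstar.
Proof.
move=> cC Cz [h|h].
- have C1 : C (mk true (M + 1) (sc true z)) by apply: leg_far.
  have := @leg_far false C _ (M + 1) cC C1; rewrite /= => H.
  by apply: H; exact: M1.
- have C1 : C (mk false (M + 1) (sc false z)) by apply: leg_far.
  have := @leg_far true C _ (M + 1) cC C1; rewrite /= => H.
  by apply: H; exact: M1.
Qed.

Lemma star_to_far C z : is_cell L C -> C Pstar -> far z -> C z.
Proof.
move=> cC Cz [h|h].
- have C1 : C (mk false z.1 (sc false Pstar)) by apply: leg_far => //; exact: M1.
  have := @leg_far true C _ z.2 cC C1; rewrite /= -surjective_pairing => H.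
  exact: H.
- have C1 : C (mk true z.2 (sc true Pstar)) by apply: leg_far => //; exact: M1.
  have := @leg_far false C _ z.1 cC C1; rewrite /= -surjective_pairing => H.
  exact: H.
Qed.

Lemma hit_exists C b s z t1 : is_cell L C -> C z -> 0 <= t1 -> ~ C (ray b s z t1) ->
  exists t', 0 <= t' <= t1 /\ U (ray b s z t').
Proof.
move=> cC Cz t10 nC; apply: contrapT => hn; apply: nC; apply: path_in => // t tt.
by move=> Ut; apply: hn; exists t.
Qed.

Lemma G1 C b z (sg : R) : is_cell L C -> ~ C Pstar -> C z -> ~ Bad b C (sc b z) ->
  (sg = 1 \/ sg = -1) ->
  exists t0 s, [/\ 0 < t0, assoc_subset L C s, s `<=` [set w | pc b w = pc b z + sg * t0],
    s (ray b sg z t0) & forall t, 0 <= t < t0 -> C (ray b sg z t)].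
Proof.
move=> cC nP Cz nB hsg.
pose t1 := M + `|pc b z| + 1.
have t10 : 0 <= t1 by rewrite /t1; have := normr_ge0 (pc b z); have := M0; lra.
have [t' [t'in Ut']] : exists t', 0 <= t' <= t1 /\ U (ray b sg z t').
  apply: (hit_exists cC Cz t10) => Ct1.
  apply: nP; apply: (far_to_star cC Ct1); apply: (@far_pc b); rewrite pc_ray.
  have hM := M0.
  rewrite /t1; case: hsg => ->; rewrite ?mul1r ?mulN1r.
  + have := ler_normD (pc b z + (M + `|pc b z| + 1)) (- pc b z).
    rewrite addrAC subrr add0r normrN.
    have := normr_ge0 (pc b z); rewrite (ger0_norm (x := M + _ + 1)); first lra.
    have := normr_ge0 (pc b z); lra.
  + have := ler_normD (pc b z - (M + `|pc b z| + 1)) (- pc b z).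
    rewrite addrAC subrr add0r normrN normrN.
    have := normr_ge0 (pc b z); rewrite (ger0_norm (x := M + _ + 1)); first lra.
    have := normr_ge0 (pc b z); lra.
have [t0 [t0pos t0t' Ut0 bt0 before]] := first_hit cC Cz (proj1 (andP t'in)) Ut'.
case: Ut0 => s Ls st0.
have [Ss Hs] : assoc_subset L C s /\ s `<=` [set w | pc b w = pc b (ray b sg z t0)].
  by apply: factG => //; rewrite sc_ray.
exists t0, s; split => //.
by move=> w sw /=; rewrite (Hs w sw) pc_ray.
Qed.


Lemma cross b C al be ga de ha hb vg vd w : is_cell L C -> ~ C Pstar ->
  rdata b C al be ga de ha hb vg vd -> C w -> ~ Bad b C (sc b w) ->
  ga < pc b w < de /\ forall x, ga < x < de -> C (mk b x (sc b w)).
Proof.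
move=> cC nP rd Cw nB.
have gd := rd_gd rd.
have [t1 [s1 [t1p Ss1 Hs1 s1p bef1]]] := G1 cC nP Cw nB (or_introl erefl).
have [t2 [s2 [t2p Ss2 Hs2 s2p bef2]]] := G1 cC nP Cw nB (or_intror erefl).
have V1 := rd_vert rd Ss1 Hs1 s1p.
have V2 := rd_vert rd Ss2 Hs2 s2p.
have [E1 E2] : pc b w + 1 * t1 = de /\ pc b w + -1 * t2 = ga.
  by case: V1 => [[_ e1]|[_ e1]]; case: V2 => [[_ e2]|[_ e2]]; lra.
split; first lra.
move=> x /andP[x1 x2].
have [xw|xw] := leP (pc b w) x.
- have := bef1 (x - pc b w); rewrite /ray.
  have -> : pc b w + 1 * (x - pc b w) = x by ring.
  apply; lra.
- have := bef2 (pc b w - x); rewrite /ray.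
  have -> : pc b w + -1 * (pc b w - x) = x by ring.
  apply; lra.
Qed.

Lemma gen_near C z : is_cell L C -> C z -> exists2 e : R, 0 < e &
  forall b x1 x2 y1 y2, pc b z - e <= x1 -> x1 < x2 -> x2 <= pc b z + e ->
    sc b z - e <= y1 -> y1 < y2 -> y2 <= sc b z + e ->
  exists w, [/\ C w, x1 < pc b w < x2, y1 < sc b w < y2, ~ Bad (~~ b) C (pc b w)
    & ~ Bad b C (sc b w)].
Proof.
move=> cC Cz; have [e e0 He] := square cC Cz.
exists e => // b x1 x2 y1 y2 h1 h2 h3 h4 h5 h6.
have [x [/andP[xa xb] nx]] := avoid_finite (Bad_fin (~~ b) C) h2.
have [y [/andP[ya yb] ny]] := avoid_finite (Bad_fin b C) h5.
exists (mk b x y); rewrite pc_mk sc_mk; split => //; try (apply/andP; split => //).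
apply: He.
- case: b h1 h3 h4 h6 {nx ny} => /= h1 h3 h4 h6; rewrite ltr_distl; apply/andP; split; lra.
- case: b h1 h3 h4 h6 {nx ny} => /= h1 h3 h4 h6; rewrite ltr_distl; apply/andP; split; lra.
Qed.


Lemma generic_pt C : is_cell L C -> exists w, [/\ C w, ~ Bad (~~ true) C (pc true w)
    & ~ Bad true C (sc true w)].
Proof.
move=> cC; have [z Cz] := cell_ne cC.
have [e e0 He] := gen_near cC Cz.
have [||||||w [Cw _ _ h1 h2]] := He true (pc true z - e) (pc true z + e) (sc true z - e) (sc true z + e);
  try lra.
by exists w.
Qed.

Lemma generic_pt_b C b : is_cell L C -> exists w, [/\ C w, ~ Bad (~~ b) C (pc b w)
    & ~ Bad b C (sc b w)].
Proof.
move=> cC; have [z Cz] := cell_ne cC.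
have [e e0 He] := gen_near cC Cz.
have [||||||w [Cw _ _ h1 h2]] := He b (pc b z - e) (pc b z + e) (sc b z - e) (sc b z + e);
  try lra.
by exists w.
Qed.

Lemma rd_exists C b : is_cell L C -> ~ C Pstar -> le4 (assoc_subset L C) ->
  exists al be ga de ha hb vg vd, rdata b C al be ga de ha hb vg vd.
Proof.
move=> cC nP c4.
have [z [Cz nB1 nB2]] := generic_pt_b b cC.
have [t1 [s1 [t1p Ss1 Hs1 _ _]]] := G1 cC nP Cz nB2 (or_introl erefl).
have [t2 [s2 [t2p Ss2 Hs2 _ _]]] := G1 cC nP Cz nB2 (or_intror erefl).
have nB1' : ~ Bad (~~ b) C (sc (~~ b) z) by rewrite scN.
have [t3 [s3 [t3p Ss3 Hs3 _ _]]] := G1 cC nP Cz nB1' (or_introl erefl).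
have [t4 [s4 [t4p Ss4 Hs4 _ _]]] := G1 cC nP Cz nB1' (or_intror erefl).
move/sub_pcN: Hs3; rewrite pcN => Hs3.
move/sub_pcN: Hs4; rewrite pcN => Hs4.
have pt : forall C' s, assoc_subset L C' s -> exists p, s p.
  by move=> C' s' [_ [x [_ [_ [sx _]]]]]; exists x.
have n12 : s1 <> s2.
  move=> E; have [p sp] := pt _ _ Ss1; have := Hs1 p sp; rewrite E in sp.
  have := Hs2 p sp => /= -> ; lra.
have n34 : s3 <> s4.
  move=> E; have [p sp] := pt _ _ Ss3; have := Hs3 p sp; rewrite E in sp.
  have := Hs4 p sp => /= -> ; lra.
have nhv : forall s s' c c', assoc_subset L C s -> s `<=` [set w | pc b w = c] ->
    s' `<=` [set w | sc b w = c'] -> s <> s'.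
  by move=> s s' c c' Ss H1 H2 E; apply: (nondeg Ss H1); rewrite E; exact: H2.
exists (sc b z + -1 * t4), (sc b z + 1 * t3), (pc b z + -1 * t2), (pc b z + 1 * t1).
exists s4, s3, s2, s1; split => //; try lra.
move=> s Ss; apply: contrapT => hn.
apply: (c4 s s4 s3 s2 s1) => //; try (by move=> E; apply: hn; rewrite E; tauto).
- by move=> E; apply: n34.
- by apply/nesym; apply: nhv Hs2 Hs4.
- by apply/nesym; apply: nhv Hs1 Hs4.
- by apply/nesym; apply: nhv Hs2 Hs3.
- by apply/nesym; apply: nhv Hs1 Hs3.
- by move=> E; apply: n12.
Qed.

Lemma rd_contain b C al be ga de ha hb vg vd z : is_cell L C -> ~ C Pstar ->
  rdata b C al be ga de ha hb vg vd -> C z -> ga < pc b z < de /\ al < sc b z < be.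
Proof.
move=> cC nP rd Cz.
have rd' := rdata_swap rd.
have [e e0 He] := gen_near cC Cz.
split; apply/andP; split; rewrite ltNge; apply/negP => h.
- have [||||||w [Cw h1 h2 n1 n2]] := He b (pc b z - e) (pc b z) (sc b z - e) (sc b z + e); try lra.
  have [h3 _] := cross cC nP rd Cw n2; lra.
- have [||||||w [Cw h1 h2 n1 n2]] := He b (pc b z) (pc b z + e) (sc b z - e) (sc b z + e); try lra.
  have [h3 _] := cross cC nP rd Cw n2; lra.
- have [||||||w [Cw h1 h2 n1 n2]] := He b (pc b z - e) (pc b z + e) (sc b z - e) (sc b z); try lra.
  rewrite -scN in n1; have [h3 _] := cross cC nP rd' Cw n1; rewrite pcN in h3; lra.
- have [||||||w [Cw h1 h2 n1 n2]] := He b (pc b z - e) (pc b z + e) (sc b z) (sc b z + e); try lra.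
  rewrite -scN in n1; have [h3 _] := cross cC nP rd' Cw n1; rewrite pcN in h3; lra.
Qed.

Lemma rd_dense b C al be ga de ha hb vg vd : is_cell L C -> ~ C Pstar ->
  rdata b C al be ga de ha hb vg vd -> forall u v, ga <= u -> u < v -> v <= de ->
  exists x, u < x < v /\ forall y, al < y < be -> C (mk b x y).
Proof.
move=> cC nP rd u v h1 h2 h3.
have [z [Cz nB1 nB2]] := generic_pt_b b cC.
have [_ full] := cross cC nP rd Cz nB2.
have [x [/andP[x1 x2] nx]] := avoid_finite (Bad_fin (~~ b) C) h2.
exists x; split; first by rewrite x1 x2.
have Cw : C (mk b x (sc b z)) by apply: full; lra.
have nB : ~ Bad (~~ b) C (sc (~~ b) (mk b x (sc b z))) by rewrite scN pc_mk.
have [_ full'] := cross cC nP (rdata_swap rd) Cw nB.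
move=> y yin; have := full' y yin; rewrite scN pc_mk mkN //.
Qed.

Lemma overlap b C1 C2 al1 be1 ga1 de1 ha1 hb1 vg1 vd1 al2 be2 ga2 de2 ha2 hb2 vg2 vd2
    u v u' v' :
  is_cell L C1 -> is_cell L C2 -> ~ C1 Pstar -> ~ C2 Pstar ->
  rdata b C1 al1 be1 ga1 de1 ha1 hb1 vg1 vd1 -> rdata b C2 al2 be2 ga2 de2 ha2 hb2 vg2 vd2 ->
  ga1 <= u -> ga2 <= u -> u < v -> v <= de1 -> v <= de2 ->
  al1 <= u' -> al2 <= u' -> u' < v' -> v' <= be1 -> v' <= be2 -> C1 = C2.
Proof.
move=> c1 c2 n1 n2 rd1 rd2 h1 h2 h3 h4 h5 h6 h7 h8 h9 h10.
have [x [/andP[x1 x2] Hx]] := rd_dense c1 n1 rd1 h1 h3 h4.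
have [y [/andP[y1 y2] Hy]] := rd_dense c2 n2 (rdata_swap rd2) h7 h8 h10.
apply: (@cell_meet _ _ (mk b x y) c1 c2).
  by apply: Hx; lra.
by rewrite -mkN; apply: Hy; lra.
Qed.

Lemma roles b C al be ga de ha hb vg vd p q r cp cq :
  rdata b C al be ga de ha hb vg vd ->
  assoc_subset L C p -> assoc_subset L C q -> assoc_subset L C r ->
  p <> q -> p <> r -> q <> r ->
  p `<=` [set z | sc b z = cp] -> q `<=` [set z | sc b z = cq] ->
  ((al = cp /\ be = cq) \/ (al = cq /\ be = cp)) /\
  (r `<=` [set z | pc b z = ga] \/ r `<=` [set z | pc b z = de]).
Proof.
move=> rd Sp Sq Sr npq npr nqr Hp Hq.
have pt : forall s, assoc_subset L C s -> exists x, s x.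
  by move=> s' [_ [x [_ [_ [sx _]]]]]; exists x.
have hor : forall s c, assoc_subset L C s -> s `<=` [set z | sc b z = c] ->
    (s = ha /\ c = al) \/ (s = hb /\ c = be).
  move=> s c Ss Hs; have [x sx] := pt s Ss.
  case: (rd_cls rd Ss) => [E|[E|[E|E]]].
  - by left; split => //; rewrite -(Hs x sx); move: sx; rewrite E => /(rd_ha rd).
  - by right; split => //; rewrite -(Hs x sx); move: sx; rewrite E => /(rd_hb rd).
  - by exfalso; apply: (nondeg Ss _ Hs); rewrite E; exact: (rd_vg rd).
  - by exfalso; apply: (nondeg Ss _ Hs); rewrite E; exact: (rd_vd rd).
have [[Ep ep]|[Ep ep]] := hor p cp Sp Hp; have [[Eq eq]|[Eq eq]] := hor q cq Sq Hq;
  try (by exfalso; apply: npq; rewrite Ep Eq).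
- split; first by left.
  case: (rd_cls rd Sr) => [E|[E|[E|E]]].
  + by exfalso; apply: npr; rewrite Ep E.
  + by exfalso; apply: nqr; rewrite Eq E.
  + by left; rewrite E; exact: (rd_vg rd).
  + by right; rewrite E; exact: (rd_vd rd).
- split; first by right.
  case: (rd_cls rd Sr) => [E|[E|[E|E]]].
  + by exfalso; apply: nqr; rewrite Eq E.
  + by exfalso; apply: npr; rewrite Ep E.
  + by left; rewrite E; exact: (rd_vg rd).
  + by right; rewrite E; exact: (rd_vd rd).
Qed.

Lemma side_hit C3 C1 b (sg : R) zs t1 : is_cell L C3 -> is_cell L C1 -> C3 <> C1 ->
  C3 zs -> ~ Bad b C3 (sc b zs) -> 0 <= t1 -> C1 (ray b sg zs t1) ->
  exists t0 s, [/\ 0 < t0, t0 <= t1, assoc_subset L C3 s,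
    s `<=` [set w | pc b w = pc b zs + sg * t0] & s (ray b sg zs t0)].
Proof.
move=> c3 c1 n31 C3z nB t10 C1t.
have [t' [/andP[t'0 t't1] Ut']] : exists t', 0 <= t' <= t1 /\ U (ray b sg zs t').
  apply: (hit_exists c3 C3z t10) => C3t; apply: n31.
  exact: (cell_meet c3 c1 C3t C1t).
have [t0 [t0p t0t' Ut0 bt0 _]] := first_hit c3 C3z t'0 Ut'.
case: Ut0 => s Ls st0.
have [Ss Hs] : assoc_subset L C3 s /\ s `<=` [set w | pc b w = pc b (ray b sg zs t0)].
  by apply: factG => //; rewrite sc_ray.
exists t0, s; split => //; first lra.
by move=> w sw /=; rewrite (Hs w sw) pc_ray.
Qed.

Lemma final3 b C1 C2 C3 al be ga1 x0 de2 ha1 hb1 vg1 vd1 ha2 hb2 vg2 vd2 p q r cp cq :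
  is_cell L C1 -> is_cell L C2 -> is_cell L C3 -> ~ C1 Pstar -> ~ C2 Pstar ->
  C3 <> C1 -> C3 <> C2 ->
  rdata b C1 al be ga1 x0 ha1 hb1 vg1 vd1 -> rdata b C2 al be x0 de2 ha2 hb2 vg2 vd2 ->
  ((al = cp /\ be = cq) \/ (al = cq /\ be = cp)) ->
  assoc_subset L C3 p -> assoc_subset L C3 q -> assoc_subset L C3 r ->
  p <> q -> p <> r -> q <> r ->
  p `<=` [set z | sc b z = cp] -> q `<=` [set z | sc b z = cq] ->
  r `<=` [set z | pc b z = x0] -> le4 (assoc_subset L C3) -> False.
Proof.
move=> c1 c2 c3 n1 n2 n31 n32 rd1 rd2 Hab S3p S3q S3r npq npr nqr Hp Hq Hr c4.
have ab := rd_ab rd1.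
have g1 := rd_gd rd1.
have g2 := rd_gd rd2.
have [rx rxr] : exists x, r x by case: S3r => _ [x [_ [_ [sx _]]]]; exists x.
have [P3|nP3] := pselect (C3 Pstar); last first.
  have [al3 [be3 [ga3 [de3 [ha3 [hb3 [vg3 [vd3 rd3]]]]]]]] := rd_exists b c3 nP3 c4.
  have g3 := rd_gd rd3; have ab3 := rd_ab rd3.
  have [Hab3 Hr3] := roles rd3 S3p S3q S3r npq npr nqr Hp Hq.
  have [e1 e2] : al3 = al /\ be3 = be by case: Hab3 => -[e3 e4]; case: Hab => -[e1 e2]; lra.
  rewrite e1 e2 in rd3.
  case: Hr3 => Hr3.
  - have e : ga3 = x0 by rewrite -(Hr3 rx rxr) (Hr rx rxr).
    rewrite e in rd3 g3.
    have [h|h] := leP de2 de3.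
    + by apply: n32; apply: (overlap c3 c2 nP3 n2 rd3 rd2 (u := x0) (v := de2) (u' := al) (v' := be)); lra.
    + by apply: n32; apply: (overlap c3 c2 nP3 n2 rd3 rd2 (u := x0) (v := de3) (u' := al) (v' := be)); lra.
  - have e : de3 = x0 by rewrite -(Hr3 rx rxr) (Hr rx rxr).
    rewrite e in rd3 g3.
    have [h|h] := leP ga1 ga3.
    + by apply: n31; apply: (overlap c3 c1 nP3 n1 rd3 rd1 (u := ga3) (v := x0) (u' := al) (v' := be)); lra.
    + by apply: n31; apply: (overlap c3 c1 nP3 n1 rd3 rd1 (u := ga1) (v := x0) (u' := al) (v' := be)); lra.
(* outer case *)
have [x1 [/andP[x11 x12] Hx1]] := rd_dense c1 n1 rd1 (lexx ga1) g1 (lexx x0).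
have [x2 [/andP[x21 x22] Hx2]] := rd_dense c2 n2 rd2 (lexx x0) g2 (lexx de2).
have [y [/andP[y1 y2] ny]] := avoid_finite (Bad_fin b C3) ab.
pose N := M + `|x1| + `|x2| + 1.
have hM := M0.
have nx1 := normr_ge0 x1; have nx2 := normr_ge0 x2.
have lx1 := ler_norm x1; have lx2 := ler_norm x2.
have lx1' : - x1 <= `|x1| by rewrite -normrN ler_norm.
have lx2' : - x2 <= `|x2| by rewrite -normrN ler_norm.
have N0 : M < N by rewrite /N; lra.
have farL : C3 (mk b (- N) y).
  apply: (star_to_far c3 P3); apply: (@far_pc b); rewrite pc_mk normrN ger0_norm //; lra.
have farR : C3 (mk b N y).
  apply: (star_to_far c3 P3); apply: (@far_pc b); rewrite pc_mk ger0_norm //; lra.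
have [tL [sL [tLp tLle SL HL sLp]]] : exists t0 s, [/\ 0 < t0, t0 <= x1 + N,
    assoc_subset L C3 s, s `<=` [set w | pc b w = pc b (mk b (- N) y) + 1 * t0]
    & s (ray b 1 (mk b (- N) y) t0)].
  apply: (side_hit c3 c1 n31 farL); first by rewrite sc_mk.
    rewrite /N; lra.
  rewrite /ray pc_mk sc_mk.
  have -> : - N + 1 * (x1 + N) = x1 by ring.
  by apply: Hx1; rewrite y1 y2.
have [tR [sR [tRp tRle SR HR sRp]]] : exists t0 s, [/\ 0 < t0, t0 <= N - x2,
    assoc_subset L C3 s, s `<=` [set w | pc b w = pc b (mk b N y) + -1 * t0]
    & s (ray b (-1) (mk b N y) t0)].
  apply: (side_hit c3 c2 n32 farR); first by rewrite sc_mk.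
    rewrite /N; lra.
  rewrite /ray pc_mk sc_mk.
  have -> : N + -1 * (N - x2) = x2 by ring.
  by apply: Hx2; rewrite y1 y2.
rewrite pc_mk in HL; rewrite pc_mk in HR.
clearbody N.
have pL := HL _ sLp; have pR := HR _ sRp; rewrite /= in pL pR.
apply: (c4 p q r sL sR) => //.
- by move=> E; apply: (nondeg SL HL); rewrite -E; exact: Hp.
- by move=> E; apply: (nondeg SR HR); rewrite -E; exact: Hp.
- by move=> E; apply: (nondeg SL HL); rewrite -E; exact: Hq.
- by move=> E; apply: (nondeg SR HR); rewrite -E; exact: Hq.
- move=> E; rewrite -E in sLp; have := Hr _ sLp; rewrite /= pL; lra.
- move=> E; rewrite -E in sRp; have := Hr _ sRp; rewrite /= pR; lra.
- move=> E; rewrite -E in sRp; have := HL _ sRp; rewrite /= pR; lra.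
Qed.

Lemma key2 b C1 C2 C3 p q r cp cq :
  is_cell L C1 -> is_cell L C2 -> is_cell L C3 -> ~ C1 Pstar -> ~ C2 Pstar ->
  C1 <> C2 -> C3 <> C1 -> C3 <> C2 ->
  assoc_subset L C1 p -> assoc_subset L C1 q -> assoc_subset L C1 r ->
  assoc_subset L C2 p -> assoc_subset L C2 q -> assoc_subset L C2 r ->
  assoc_subset L C3 p -> assoc_subset L C3 q -> assoc_subset L C3 r ->
  p <> q -> p <> r -> q <> r ->
  p `<=` [set z | sc b z = cp] -> q `<=` [set z | sc b z = cq] ->
  le4 (assoc_subset L C1) -> le4 (assoc_subset L C2) -> le4 (assoc_subset L C3) -> False.
Proof.
move=> c1 c2 c3 n1 n2 n12 n31 n32 S1p S1q S1r S2p S2q S2r S3p S3q S3r npq npr nqr Hp Hq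
  l1 l2 l3.
have [al1 [be1 [ga1 [de1 [ha1 [hb1 [vg1 [vd1 rd1]]]]]]]] := rd_exists b c1 n1 l1.
have [al2 [be2 [ga2 [de2 [ha2 [hb2 [vg2 [vd2 rd2]]]]]]]] := rd_exists b c2 n2 l2.
have ab1 := rd_ab rd1; have ab2 := rd_ab rd2; have g1 := rd_gd rd1; have g2 := rd_gd rd2.
have [Hab1 Hr1] := roles rd1 S1p S1q S1r npq npr nqr Hp Hq.
have [Hab2 Hr2] := roles rd2 S2p S2q S2r npq npr nqr Hp Hq.
have [e1 e2] : al2 = al1 /\ be2 = be1 by case: Hab1 => -[e3 e4]; case: Hab2 => -[e1 e2]; lra.
rewrite e1 e2 in rd2.
have [rx rxr] : exists x, r x by case: S3r => _ [x [_ [_ [sx _]]]]; exists x.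
case: Hr1 => Hr1; case: Hr2 => Hr2.
- have e : ga2 = ga1 by rewrite -(Hr1 rx rxr) (Hr2 rx rxr).
  rewrite e in rd2 g2.
  have [h|h] := leP de1 de2.
  + by apply: n12; apply: (overlap c1 c2 n1 n2 rd1 rd2 (u := ga1) (v := de1) (u' := al1) (v' := be1)); lra.
  + by apply: n12; apply: (overlap c1 c2 n1 n2 rd1 rd2 (u := ga1) (v := de2) (u' := al1) (v' := be1)); lra.
- have e : de2 = ga1 by rewrite -(Hr1 rx rxr) (Hr2 rx rxr).
  rewrite e in rd2.
  apply: (final3 c2 c1 c3 n2 n1 n32 n31 rd2 rd1 Hab1 S3p S3q S3r npq npr nqr Hp Hq Hr1 l3).
- have e : ga2 = de1 by rewrite -(Hr1 rx rxr) (Hr2 rx rxr).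
  rewrite e in rd2.
  apply: (final3 c1 c2 c3 n1 n2 n31 n32 rd1 rd2 Hab1 S3p S3q S3r npq npr nqr Hp Hq Hr1 l3).
- have e : de2 = de1 by rewrite -(Hr1 rx rxr) (Hr2 rx rxr).
  rewrite e in rd2 g2.
  have [h|h] := leP ga1 ga2.
  + by apply: n12; apply: (overlap c1 c2 n1 n2 rd1 rd2 (u := ga2) (v := de1) (u' := al1) (v' := be1)); lra.
  + by apply: n12; apply: (overlap c1 c2 n1 n2 rd1 rd2 (u := ga1) (v := de1) (u' := al1) (v' := be1)); lra.
Qed.

Lemma hor_or s : L s -> (exists c, s `<=` [set z | sc true z = c]) \/
  (exists c, s `<=` [set z | sc false z = c]).
Proof. by move=> Ls; case: (axis_frame false (axL Ls)) => [[c H]|[c H]]; [left|right]; exists c. Qed.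

Lemma key C1 C2 C3 l l' l'' :
  is_cell L C1 -> is_cell L C2 -> is_cell L C3 -> ~ C1 Pstar -> ~ C2 Pstar ->
  C1 <> C2 -> C3 <> C1 -> C3 <> C2 ->
  assoc_subset L C1 l -> assoc_subset L C1 l' -> assoc_subset L C1 l'' ->
  assoc_subset L C2 l -> assoc_subset L C2 l' -> assoc_subset L C2 l'' ->
  assoc_subset L C3 l -> assoc_subset L C3 l' -> assoc_subset L C3 l'' ->
  l <> l' -> l <> l'' -> l' <> l'' ->
  le4 (assoc_subset L C1) -> le4 (assoc_subset L C2) -> le4 (assoc_subset L C3) -> False.
Proof.
move=> c1 c2 c3 n1 n2 n12 n31 n32 S1a S1b S1c S2a S2b S2c S3a S3b S3c nab nac nbc l1 l2 l3.
have La : L l by case: S1a. have Lb : L l' by case: S1b. have Lc : L l'' by case: S1c.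
case: (hor_or La) => [[ca Ha]|[ca Ha]]; case: (hor_or Lb) => [[cb Hb]|[cb Hb]];
  case: (hor_or Lc) => [[cc Hc]|[cc Hc]].
- exact: (key2 c1 c2 c3 n1 n2 n12 n31 n32 S1a S1b S1c S2a S2b S2c S3a S3b S3c nab nac nbc Ha Hb l1 l2 l3).
- exact: (key2 c1 c2 c3 n1 n2 n12 n31 n32 S1a S1b S1c S2a S2b S2c S3a S3b S3c nab nac nbc Ha Hb l1 l2 l3).
- exact: (key2 c1 c2 c3 n1 n2 n12 n31 n32 S1a S1c S1b S2a S2c S2b S3a S3c S3b nac nab (nesym nbc) Ha Hc l1 l2 l3).
- exact: (key2 c1 c2 c3 n1 n2 n12 n31 n32 S1b S1c S1a S2b S2c S2a S3b S3c S3a nbc (nesym nab) (nesym nac) Hb Hc l1 l2 l3).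
- exact: (key2 c1 c2 c3 n1 n2 n12 n31 n32 S1b S1c S1a S2b S2c S2a S3b S3c S3a nbc (nesym nab) (nesym nac) Hb Hc l1 l2 l3).
- exact: (key2 c1 c2 c3 n1 n2 n12 n31 n32 S1a S1c S1b S2a S2c S2b S3a S3c S3b nac nab (nesym nbc) Ha Hc l1 l2 l3).
- exact: (key2 c1 c2 c3 n1 n2 n12 n31 n32 S1a S1b S1c S2a S2b S2c S3a S3b S3c nab nac nbc Ha Hb l1 l2 l3).
- exact: (key2 c1 c2 c3 n1 n2 n12 n31 n32 S1a S1b S1c S2a S2b S2c S3a S3b S3c nab nac nbc Ha Hb l1 l2 l3).
Qed.
End Far.

Lemma no_three C1 C2 C3 l l' l'' :
  is_cell L C1 -> is_cell L C2 -> is_cell L C3 ->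
  C1 <> C2 -> C1 <> C3 -> C2 <> C3 ->
  assoc_subset L C1 l -> assoc_subset L C1 l' -> assoc_subset L C1 l'' ->
  assoc_subset L C2 l -> assoc_subset L C2 l' -> assoc_subset L C2 l'' ->
  assoc_subset L C3 l -> assoc_subset L C3 l' -> assoc_subset L C3 l'' ->
  l <> l' -> l <> l'' -> l' <> l'' ->
  le4 (assoc_subset L C1) -> le4 (assoc_subset L C2) -> le4 (assoc_subset L C3) -> False.
Proof.
move=> c1 c2 c3 n12 n13 n23 S1a S1b S1c S2a S2b S2c S3a S3b S3c nab nac nbc l1 l2 l3.
have [M [M0 HM]] := U_bounded.
have [P1|P1] := pselect (C1 (Pstar M)).
  have P2 : ~ C2 (Pstar M) by move=> P2; apply: n12; exact: (cell_meet c1 c2 P1 P2).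
  have P3 : ~ C3 (Pstar M) by move=> P3; apply: n13; exact: (cell_meet c1 c3 P1 P3).
  exact: (key M0 HM c2 c3 c1 P2 P3 n23 n12 n13 S2a S2b S2c S3a S3b S3c
    S1a S1b S1c nab nac nbc l2 l3 l1).
have [P2|P2] := pselect (C2 (Pstar M)).
  have P3 : ~ C3 (Pstar M) by move=> P3; apply: n23; exact: (cell_meet c2 c3 P2 P3).
  exact: (key M0 HM c1 c3 c2 P1 P3 n13 (nesym n12) n23 S1a S1b S1c S3a S3b S3c
    S2a S2b S2c nab nac nbc l1 l3 l2).
exact: (key M0 HM c1 c2 c3 P1 P2 n12 (nesym n13) (nesym n23) S1a S1b S1c S2a S2b S2c
    S3a S3b S3c nab nac nbc l1 l2 l3).
Qed.
End Cells.




Lemma le4_of_card (R : realType) (A : set (set (R * R))) : (A #= `I_4)%card -> le4 A.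
Proof.
rewrite card_eq_le => /andP[/pcard_leP /injfunPex [f fA finj] _].
move=> a b c d e Aa Ab Ac Ad Ae nab nac nad nae nbc nbd nbe ncd nce nde.
have ne : forall x y, A x -> A y -> x <> y -> f x <> f y.
  by move=> x y Ax Ay nxy fxy; apply: nxy; apply: finj => //; rewrite inE.
have := fA a Aa; have := fA b Ab; have := fA c Ac; have := fA d Ad; have := fA e Ae.
rewrite /= => he hd hc hb ha.
have := ne _ _ Aa Ab nab; have := ne _ _ Aa Ac nac; have := ne _ _ Aa Ad nad;
have := ne _ _ Aa Ae nae; have := ne _ _ Ab Ac nbc; have := ne _ _ Ab Ad nbd;
have := ne _ _ Ab Ae nbe; have := ne _ _ Ac Ad ncd; have := ne _ _ Ac Ae nce;
have := ne _ _ Ad Ae nde.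
move: (f a) (f b) (f c) (f d) (f e) ha hb hc hd he.
case=> [|[|[|[|?]]]] //; case=> [|[|[|[|?]]]] //; case=> [|[|[|[|?]]]] //;
  case=> [|[|[|[|?]]]] //; case=> [|[|[|[|?]]]] //.
Qed.

Local Close Scope ring_scope.

Theorem lemma2 (R : realType) (L : set (set (R * R)))
  (finL : finite_set L) (axL : forall l, L l -> axis_segment l)
  (l l' l'' : set (R * R)) (Ll : L l) (Ll' : L l') (Ll'' : L l'')
  (n12 : l <> l') (n13 : l <> l'') (n23 : l' <> l'') :
  ([set S | rect_subsets L S /\ S l /\ S l' /\ S l''] #<= `I_2)%card.
Proof.
set X := [set S | rect_subsets L S /\ S l /\ S l' /\ S l''].
have three : forall S1 S2 S3, X S1 -> X S2 -> X S3 -> S1 <> S2 -> S1 <> S3 -> S2 <> S3 -> False.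
  move=> S1 S2 S3 [[C1 [[c1 k1] E1]] [a1 [b1 d1]]] [[C2 [[c2 k2] E2]] [a2 [b2 d2]]]
    [[C3 [[c3 k3] E3]] [a3 [b3 d3]]] n1 n2 n3.
  subst S1 S2 S3.
  apply: (no_three finL axL c1 c2 c3 _ _ _ a1 b1 d1 a2 b2 d2 a3 b3 d3 n12 n13 n23
    (le4_of_card k1) (le4_of_card k2) (le4_of_card k3)).
  - by move=> E; apply: n1; rewrite E.
  - by move=> E; apply: n2; rewrite E.
  - by move=> E; apply: n3; rewrite E.
apply/pcard_leP/injfunPex.
have [[a Xa]|nX] := pselect (X !=set0); last first.
  exists (fun _ => 0%N) => [S XS|S S' XS]; first by exfalso; apply: nX; exists S.
  by move: XS; rewrite inE => XS; exfalso; apply: nX; exists S.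
exists (fun S => if `[< S = a >] then 0%N else 1%N).
  by move=> S _; rewrite /=; case: ifP.
move=> S S'; rewrite !inE => XS XS' /=.
case: (boolP `[< S = a >]) => /asboolP hS; case: (boolP `[< S' = a >]) => /asboolP hS' //.
- by move=> _; rewrite hS hS'.
- move=> _; apply: contrapT => nSS'.
  by apply: (three a S S') => //; apply/nesym.
Qed.
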